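(* Let $k\ge1$ be odd and $\Gamma_1=\mathbf{PSL}(2,\mathbb{Z}[i])$. Let $S=\begin{psmallmatrix}0&-1\\1&0\end{psmallmatrix}$, $T=\begin{psmallmatrix}1&1\\0&1\end{psmallmatrix}$, $T_\omega=\begin{psmallmatrix}1&i\\0&1\end{psmallmatrix}$, $L=\begin{psmallmatrix}i&0\\0&-i\end{psmallmatrix}$, $U=TS$, $E=T_\omega SL$. Let $C_p(\Gamma_1,V_{k,k})$ be the space of maps $f:\Gamma_1\to V_{k,k}$ with $f(\gamma_1\gamma_2)=f(\gamma_1)|\gamma_2+f(\gamma_2)$ for all $\gamma_1,\gamma_2\in\Gamma_1$ and $f(T)=f(T_\omega)=f(L)=0$, and let $$W_{k,k}=\ker(\mathbf{1}+S)\cap\ker(\mathbf{1}-L)\cap\ker(\mathbf{1}+U+U^2)\cap\ker(\mathbf{1}+E+E^2)\subset V_{k,k}.$$ Then $f\mapsto f(S)$ is a $\mathbb{C}$-linear isomorphism $C_p(\Gamma_1,V_{k,k})\to W_{k,k}$.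
   Context: $V_{k,k}$ is the space of polynomials $\sum_{0\le i,j\le k}c_{ij}z^i\bar z^j$ ($c_{ij}\in\mathbb{C}$, $z,\bar z$ independent variables) with right action of $\gamma=\begin{psmallmatrix}a&b\\c&e\end{psmallmatrix}$: $(P|\gamma)(z,\bar z)=(cz+e)^k\overline{(cz+e)}^kP\!\left(\frac{az+b}{cz+e},\frac{\bar a\bar z+\bar b}{\bar c\bar z+\bar e}\right)$, extended linearly to the group ring; $\ker(X)=\{P\in V_{k,k}:P|X=0\}$. *)

(* Defs.v *)
From HB Require Import structures.
From mathcomp Require Import all_boot all_order all_algebra.
From mathcomp Require Import complex.
From mathcomp Require Import reals.
Set Implicit Arguments. Unset Strict Implicit. Unset Printing Implicit Defensive.
Import Order.TTheory GRing.Theory Num.Theory.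
Local Open Scope ring_scope.
Local Open Scope complex_scope.

Section Defs.
Variable R : realType.
Local Notation C := R[i].

Definition gaussInt (z : C) : Prop :=
  exists a b : int, z = Complex (a%:~R) (b%:~R).

Definition inSL2Zi (g : 'M[C]_2) : Prop :=
  (forall i j, gaussInt (g i j)) /\ \det g = 1.

Definition mx2 (a b c d : C) : 'M[C]_2 :=
  \matrix_(i < 2, j < 2)
    if val i == 0%N then (if val j == 0%N then a else b)
    else (if val j == 0%N then c else d).

Definition Smx  : 'M[C]_2 := mx2 0 (-1) 1 0.
Definition Tmx  : 'M[C]_2 := mx2 1 1 0 1.
Definition Twmx : 'M[C]_2 := mx2 1 'i 0 1.
Definition Lmx  : 'M[C]_2 := mx2 'i 0 0 (-'i).
Definition Umx  : 'M[C]_2 := Tmx *m Smx.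
Definition Emx  : 'M[C]_2 := Twmx *m Smx *m Lmx.

(* V_{k,k}: the polynomial sum_{0<=i,j<=k} c_ij z^i zbar^j is represented by
   its coefficient matrix (c_ij) in 'M[C]_(k.+1, k.+1). *)
Definition Vkk (k : nat) := 'M[C]_(k.+1, k.+1).

Definition slash_factor (k : nat) (a b c e : C) (i : nat) : {poly C} :=
  (a *: 'X + b%:P) ^+ i * (c *: 'X + e%:P) ^+ (k - i).

(* Right action (P|g)(z,zb) = (cz+e)^k conj(cz+e)^k P((az+b)/(cz+e), conj...)
   written out on coefficients:
   P|g = sum_{i,j} c_ij (az+b)^i (cz+e)^(k-i) (conj(a) zb + conj(b))^j (conj(c) zb + conj(e))^(k-j). *)
Definition slash (k : nat) (P : Vkk k) (g : 'M[C]_2) : Vkk k :=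
  let a := g 0 0 in let b := g 0 1 in let c := g 1 0 in let e := g 1 1 in
  \matrix_(m < k.+1, n < k.+1)
    \sum_(i < k.+1) \sum_(j < k.+1)
      P i j * (slash_factor k a b c e i)`_m
            * (slash_factor k (conjc a) (conjc b) (conjc c) (conjc e) j)`_n.

Definition inW (k : nat) (P : Vkk k) : Prop :=
  [/\ P + slash P Smx = 0,
      P - slash P Lmx = 0,
      P + slash P Umx + slash P (Umx *m Umx) = 0 &
      P + slash P Emx + slash P (Emx *m Emx) = 0].

(* C_p(Gamma_1, V_{k,k}) with Gamma_1 = PSL(2,Z[i]): a map on PSL(2,Z[i]) is
   encoded as a map f on 2x2 complex matrices, of which only the values on
   SL(2,Z[i]) matter, with f(-g) = f(g) (so it factors through PSL). *)
Definition inCp (k : nat) (f : 'M[C]_2 -> Vkk k) : Prop :=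
  [/\ (forall g, inSL2Zi g -> f (- g) = f g),
      (forall g1 g2, inSL2Zi g1 -> inSL2Zi g2 ->
         f (g1 *m g2) = slash (f g1) g2 + f g2),
      f Tmx = 0, f Twmx = 0 & f Lmx = 0].

End Defs.

(* Main.v *)
Require Import Defs.
From HB Require Import structures.
From mathcomp Require Import all_boot all_order all_algebra.
From mathcomp Require Import complex.
From mathcomp Require Import reals.
From mathcomp Require Import ring lra zify.
Set Implicit Arguments. Unset Strict Implicit. Unset Printing Implicit Defensive.
Import Order.TTheory GRing.Theory Num.Theory.
Local Open Scope ring_scope.

Record gi := GI { gre : int; gim : int }.
Definition gadd x y := GI (gre x + gre y) (gim x + gim y).
Definition gmul x y := GI (gre x * gre y - gim x * gim y) (gre x * gim y + gim x * gre y).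
Definition gopp x := GI (- gre x) (- gim x).
Definition gN x : int := gre x * gre x + gim x * gim x.
Record GM := Mk { ma : gi; mb : gi; mc : gi; md : gi }.
Definition mmul g h := Mk (gadd (gmul (ma g) (ma h)) (gmul (mb g) (mc h)))
                          (gadd (gmul (ma g) (mb h)) (gmul (mb g) (md h)))
                          (gadd (gmul (mc g) (ma h)) (gmul (md g) (mc h)))
                          (gadd (gmul (mc g) (mb h)) (gmul (md g) (md h))).
Definition mneg g := Mk (gopp (ma g)) (gopp (mb g)) (gopp (mc g)) (gopp (md g)).
Definition adj g := Mk (md g) (gopp (mb g)) (gopp (mc g)) (ma g).
Definition gdet g := gadd (gmul (ma g) (md g)) (gopp (gmul (mb g) (mc g))).
Definition g0 := GI 0 0. Definition g1 := GI 1 0. Definition gi_ := GI 0 1.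
Definition m1 := Mk g1 g0 g0 g1.
Definition Tn n := Mk g1 n g0 g1.
Definition Sg := Mk g0 (gopp g1) g1 g0.
Definition Lg := Mk gi_ g0 g0 (gopp gi_).
Definition Tg := Tn g1.
Definition Twg := Tn gi_.
Infix "**" := mmul (at level 40, left associativity).

Lemma GM_ext g h :
  gre (ma g) = gre (ma h) -> gim (ma g) = gim (ma h) ->
  gre (mb g) = gre (mb h) -> gim (mb g) = gim (mb h) ->
  gre (mc g) = gre (mc h) -> gim (mc g) = gim (mc h) ->
  gre (md g) = gre (md h) -> gim (md g) = gim (md h) -> g = h.
Proof.
destruct g as [[] [] [] []], h as [[] [] [] []]; simpl; intros; subst; reflexivity.
Qed.

Ltac gmdes g := let a1 := fresh "a" in let a2 := fresh "a" in
  let b1 := fresh "b" in let b2 := fresh "b" in let c1 := fresh "c" in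
  let c2 := fresh "c" in let d1 := fresh "d" in let d2 := fresh "d" in
  case: g => [[a1 a2] [b1 b2] [c1 c2] [d1 d2]].
Ltac gmring := apply: GM_ext => /=; ring.

Lemma gi_ext x y : gre x = gre y -> gim x = gim y -> x = y.
Proof. destruct x, y; simpl; intros; subst; reflexivity. Qed.
Ltac gides x := let a1 := fresh "x" in let a2 := fresh "x" in case: x => [a1 a2].
Ltac giring := apply: gi_ext => /=; ring.

Definition det1 g := gdet g = g1.
Definition hc g := gN (mc g).
Definition hd g := gN (md g).

Lemma gN_ge0 x : 0 <= gN x.
Proof. rewrite /gN; nia. Qed.
Lemma gN_eq0 x : gN x = 0 -> x = g0.
Proof. case: x => a b; rewrite /gN /= => h. have ha : a = 0 by nia. have hb : b = 0 by nia. by rewrite ha hb. Qed.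
Lemma gN_opp x : gN (gopp x) = gN x.
Proof. rewrite /gN /=; ring. Qed.
Lemma gN_mul x y : gN (gmul x y) = gN x * gN y.
Proof. rewrite /gN /=; ring. Qed.
Lemma gN_i x : gN (gmul gi_ x) = gN x.
Proof. by rewrite gN_mul /gN /= mul0r mul1r add0r mul1r. Qed.

Lemma adjM x y : adj (x ** y) = adj y ** adj x.
Proof. gmdes x; gmdes y; gmring. Qed.
Lemma det1M x y : det1 x -> det1 y -> det1 (x ** y).
Proof.
rewrite /det1 /gdet; gmdes x; gmdes y => /= [[h1 h2] [h3 h4]].
apply: gi_ext => /=; nia.
Qed.
Lemma det1N x : det1 x -> det1 (mneg x).
Proof. rewrite /det1 /gdet; gmdes x => /= [[h1 h2]]. apply: gi_ext => /=; nia. Qed.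
Lemma det1Tn n : det1 (Tn n).
Proof. case: n => *; apply: gi_ext => /=; ring. Qed.
Lemma det1S : det1 Sg. Proof. by apply: gi_ext. Qed.
Lemma det1L : det1 Lg. Proof. by apply: gi_ext. Qed.
Lemma det1adj x : det1 x -> det1 (adj x).
Proof. rewrite /det1 /gdet; gmdes x => /= [[h1 h2]]. apply: gi_ext => /=; nia. Qed.

Lemma hc_Tn x n : hc (x ** Tn n) = hc x.
Proof. rewrite /hc; gmdes x; case: n => *; rewrite /gN /=; ring. Qed.
Lemma hc_L x : hc (x ** Lg) = hc x.
Proof. rewrite /hc; gmdes x; rewrite /gN /=; ring. Qed.
Lemma hd_L x : hd (x ** Lg) = hd x.
Proof. rewrite /hd; gmdes x; rewrite /gN /=; ring. Qed.
Lemma hc_N x : hc (mneg x) = hc x.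
Proof. by rewrite /hc /= gN_opp. Qed.
Lemma hc_S x : hc (x ** Sg) = hd x.
Proof. rewrite /hc /hd; gmdes x; rewrite /gN /=; ring. Qed.
Lemma hd_S x : hd (x ** Sg) = hc x.
Proof. rewrite /hc /hd; gmdes x; rewrite /gN /=; ring. Qed.
Lemma md_Tn x n : md (x ** Tn n) = gadd (gmul (mc x) n) (md x).
Proof. gmdes x; case: n => *; giring. Qed.
Lemma mc_Tn x n : mc (x ** Tn n) = mc x.
Proof. gmdes x; case: n => *; giring. Qed.

Definition gX c d : int := gre d * gre c + gim d * gim c.
Definition gY c d : int := gim d * gre c - gre d * gim c.
Definition nn c d : gi := let N := gN c in
  GI (- ((2 * gX c d + N) %/ (2 * N))%Z) (- ((2 * gY c d + N) %/ (2 * N))%Z).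
Definition adm c d n := gN (gadd (gmul c n) d) < gN c.

Lemma nn_adm c d : gN c != 0 -> adm c d (nn c d).
Proof.
move=> hN; rewrite /adm /nn.
set N := gN c. set X := gX c d. set Y := gY c d.
set q1 := ((2 * X + N) %/ (2 * N))%Z. set q2 := ((2 * Y + N) %/ (2 * N))%Z.
have N0 : 0 < N by rewrite lt0r hN gN_ge0.
have N2 : 2 * N != 0 by rewrite mulf_neq0.
have e1 := divz_eq (2 * X + N) (2 * N). have e2 := divz_eq (2 * Y + N) (2 * N).
have r1 := modz_ge0 (2 * X + N) N2. have r2 := modz_ge0 (2 * Y + N) N2.
have s1 : ((2 * X + N) %% (2 * N))%Z < 2 * N by apply: ltz_pmod; lia.
have s2 : ((2 * Y + N) %% (2 * N))%Z < 2 * N by apply: ltz_pmod; lia.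
rewrite -/q1 -/q2 in e1 e2.
set m1 := ((2 * X + N) %% (2 * N))%Z in e1 r1 s1.
set m2 := ((2 * Y + N) %% (2 * N))%Z in e2 r2 s2.
have key : gN (gadd (gmul c (GI (- q1) (- q2))) d) * N = (X - q1 * N) ^+ 2 + (Y - q2 * N) ^+ 2.
  rewrite /N /X /Y /gN /gX /gY /=; ring.
have b1 : 4 * (X - q1 * N) ^+ 2 <= N ^+ 2.
  have h1 : 2 * (X - q1 * N) = m1 - N by lia.
  have e : 4 * (X - q1 * N) ^+ 2 = (m1 - N) ^+ 2 by rewrite -h1; ring.
  have h3 : 0 <= (2 * N - m1) * m1 by apply: mulr_ge0; lia.
  rewrite e; move: h3; set z := m1; clearbody z; move=> h3; nia.
have b2 : 4 * (Y - q2 * N) ^+ 2 <= N ^+ 2.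
  have h1 : 2 * (Y - q2 * N) = m2 - N by lia.
  have e : 4 * (Y - q2 * N) ^+ 2 = (m2 - N) ^+ 2 by rewrite -h1; ring.
  have h3 : 0 <= (2 * N - m2) * m2 by apply: mulr_ge0; lia.
  rewrite e; move: h3; set z := m2; clearbody z; move=> h3; nia.
have hg := gN_ge0 (gadd (gmul c (GI (- q1) (- q2))) d).
move: key b1 b2 hg; set G := gN _; set A := (X - q1 * N) ^+ 2; set B := (Y - q2 * N) ^+ 2.
clearbody G A B; clear -N0 => key b1 b2 hg.
nia.
Qed.

Lemma adm_dist c d n m : adm c d n -> adm c d m ->
  (gre m - gre n) ^+ 2 <= 1 /\ (gim m - gim n) ^+ 2 <= 1.
Proof.
rewrite /adm => hn hm.
set v := gadd (gmul c n) d in hn. set w := gadd (gmul c m) d in hm.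
have par : gN (gadd w (gopp v)) + gN (gadd w v) = 2 * gN v + 2 * gN w.
  rewrite /gN /=; ring.
have e : gN (gadd w (gopp v)) = gN c * ((gre m - gre n) ^+ 2 + (gim m - gim n) ^+ 2).
  rewrite /w /v /gN /=; ring.
have h1 := gN_ge0 (gadd w v). have h2 := gN_ge0 v. have h3 := gN_ge0 w.
have c0 : 0 < gN c by lia.
have : (gre m - gre n) ^+ 2 + (gim m - gim n) ^+ 2 < 4.
  move: par e h1 h2 h3 hn hm c0.
  set A := gN (gadd w (gopp v)); set B := gN (gadd w v).
  set Q := ((gre m - gre n) ^+ 2 + (gim m - gim n) ^+ 2); set NC := gN c.
  set V1 := gN v; set W1 := gN w.
  clearbody A B Q NC V1 W1 => *. nia.
set x := gre m - gre n; set y := gim m - gim n; clearbody x y => h.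
have hx : x ^+ 2 < 4 by nia.
have hy : y ^+ 2 < 4 by nia.
have bx1 : -1 <= x by nia.
have bx2 : x <= 1 by nia.
have by1 : -1 <= y by nia.
have by2 : y <= 1 by nia.
split; nia.
Qed.

Lemma adm_mid c d n s t : adm c d n -> adm c d (gadd n (GI s t)) ->
  adm c d (gadd n (GI s 0)) \/ adm c d (gadd n (GI 0 t)).
Proof.
rewrite /adm => hn hm.
have e : gN (gadd (gmul c (gadd n (GI s 0))) d) + gN (gadd (gmul c (gadd n (GI 0 t))) d)
   = gN (gadd (gmul c n) d) + gN (gadd (gmul c (gadd n (GI s t))) d).
  rewrite /gN /=; ring.
move: e hn hm; set A := gN _; set B := gN _; set C := gN _; set D := gN _.
clearbody A B C D; lia.
Qed.

Lemma unit_adm c d : gN c = gN d -> 0 < gN c ->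
  [\/ adm c d (GI 1 0), adm c d (GI (-1) 0), adm c d (GI 0 1) | adm c d (GI 0 (-1))].
Proof.
rewrite /adm => eN c0.
have e1 : gN (gadd (gmul c (GI 1 0)) d) = gN c + gN d + 2 * gX c d.
  rewrite /gN /gX /=; ring.
have e2 : gN (gadd (gmul c (GI (-1) 0)) d) = gN c + gN d - 2 * gX c d.
  rewrite /gN /gX /=; ring.
have e3 : gN (gadd (gmul c (GI 0 1)) d) = gN c + gN d + 2 * gY c d.
  rewrite /gN /gY /=; ring.
have e4 : gN (gadd (gmul c (GI 0 (-1))) d) = gN c + gN d - 2 * gY c d.
  rewrite /gN /gY /=; ring.
have k : gX c d ^+ 2 + gY c d ^+ 2 = gN c ^+ 2.
  rewrite [gN c ^+ 2]expr2 {2}eN /gN /gX /gY /=; ring.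
rewrite e1 e2 e3 e4 -eN.
move: k c0; set X := gX c d; set Y := gY c d; set N := gN c; clearbody X Y N => k c0.
case: (boolP (N + N + 2 * X < N)) => h1; first by constructor 1.
case: (boolP (N + N - 2 * X < N)) => h2; first by constructor 2.
case: (boolP (N + N + 2 * Y < N)) => h3; first by constructor 3.
case: (boolP (N + N - 2 * Y < N)) => h4; first by constructor 4.
exfalso; rewrite -!leNgt in h1 h2 h3 h4.
have a1 : 4 * X ^+ 2 <= N ^+ 2.
  have : 0 <= (N - 2 * X) * (N + 2 * X) by apply: mulr_ge0; lia.
  nia.
have a2 : 4 * Y ^+ 2 <= N ^+ 2.
  have : 0 <= (N - 2 * Y) * (N + 2 * Y) by apply: mulr_ge0; lia.
  nia.
nia.
Qed.

Lemma idA g n : g ** Tn (gadd n g1) ** Sg =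
   mneg (g ** Tn n ** Sg ** Tn (gopp g1) ** Sg ** Tn (gopp g1)).
Proof. by gmdes g; case: n => *; gmring. Qed.
Lemma idB g n : hd (g ** Tn n ** Sg ** Tn (gopp g1)) = gN (gadd (gmul (mc g) (gadd n g1)) (md g)).
Proof. rewrite /hd; gmdes g; case: n => *; rewrite /gN /=; ring. Qed.
Lemma idC g n : adj (g ** Tn n ** Sg ** Tn (gopp g1)) = Tg ** adj Sg ** adj (g ** Tn n).
Proof. by gmdes g; case: n => *; gmring. Qed.
Lemma idD g n : adj (g ** Tn (gadd n g1)) = adj Tg ** adj (g ** Tn n).
Proof. by gmdes g; case: n => *; gmring. Qed.
Lemma idAi g n : g ** Tn (gadd n gi_) ** Sg =
   mneg (g ** Tn n ** Sg ** Twg ** Sg ** Lg ** Twg).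
Proof. by gmdes g; case: n => *; gmring. Qed.
Lemma idBi g n : hd (g ** Tn n ** Sg ** Twg) = gN (gadd (gmul (mc g) (gadd n gi_)) (md g)).
Proof. rewrite /hd; gmdes g; case: n => *; rewrite /gN /=; ring. Qed.
Lemma idCi g n : adj (g ** Tn n ** Sg ** Twg) = adj Twg ** adj Sg ** adj (g ** Tn n).
Proof. by gmdes g; case: n => *; gmring. Qed.
Lemma idDi g n : adj (g ** Tn (gadd n gi_)) = adj Twg ** adj (g ** Tn n).
Proof. by gmdes g; case: n => *; gmring. Qed.

Lemma gaddA0 n : gadd (gadd n (GI (-1) 0)) g1 = n.
Proof. by case: n => *; giring. Qed.
Lemma gaddB0 n : gadd (gadd n (GI 0 (-1))) gi_ = n.
Proof. by case: n => *; giring. Qed.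
Lemma gadd_st n s t : gadd (gadd n (GI s 0)) (GI 0 t) = gadd n (GI s t).
Proof. by case: n => *; giring. Qed.
Lemma gadd_ts n s t : gadd (gadd n (GI 0 t)) (GI s 0) = gadd n (GI s t).
Proof. by case: n => *; giring. Qed.
Lemma gadd00 n : gadd n (GI 0 0) = n.
Proof. by case: n => *; giring. Qed.
Lemma gadd_diff n m : m = gadd n (GI (gre m - gre n) (gim m - gim n)).
Proof. by case: n; case: m => *; giring. Qed.

Lemma idI1 g m n : gadd (gmul (mc (g ** Tn m)) n) (md (g ** Tn m)) = gadd (gmul (mc g) (gadd m n)) (md g).
Proof. by gmdes g; case: n; case: m => *; giring. Qed.
Lemma idI2 g m n : g ** Tn m ** Tn n = g ** Tn (gadd m n).
Proof. by gmdes g; case: n; case: m => *; gmring. Qed.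
Lemma idL1 g n : gN (gadd (gmul (mc (g ** Lg)) n) (md (g ** Lg))) = gN (gadd (gmul (mc g) (gopp n)) (md g)).
Proof. by gmdes g; case: n => *; rewrite /gN /=; ring. Qed.
Lemma idL2 g n : g ** Lg ** Tn n ** Sg = mneg (g ** Tn (gopp n) ** Sg ** Lg).
Proof. by gmdes g; case: n => *; gmring. Qed.
Lemma idL3 g n : adj (g ** Lg ** Tn n) = adj Lg ** adj (g ** Tn (gopp n)).
Proof. by gmdes g; case: n => *; gmring. Qed.
Lemma idN1 g n : gN (gadd (gmul (mc (mneg g)) n) (md (mneg g))) = gN (gadd (gmul (mc g) n) (md g)).
Proof. by gmdes g; case: n => *; rewrite /gN /=; ring. Qed.
Lemma idN2 g n : mneg g ** Tn n ** Sg = mneg (g ** Tn n ** Sg).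
Proof. by gmdes g; case: n => *; gmring. Qed.
Lemma idN3 g n : adj (mneg g ** Tn n) = mneg (adj (g ** Tn n)).
Proof. by gmdes g; case: n => *; gmring. Qed.
Lemma idE0 g : gN (gadd (gmul (mc g) g0) (md g)) = hd g.
Proof. by gmdes g; rewrite /hd /gN /=; ring. Qed.
Lemma idE0' g : g ** Tn g0 = g.
Proof. by gmdes g; gmring. Qed.
Lemma idSS g : g ** Sg ** Sg = mneg g.
Proof. by gmdes g; gmring. Qed.
Lemma idQ1 g : gN (gadd (gmul (mc (g ** Sg)) (gopp g1)) (md (g ** Sg))) = gN (gadd (gmul (mc g) g1) (md g)).
Proof. by gmdes g; rewrite /gN /=; ring. Qed.
Lemma idQ2 g : g ** Sg ** Tn (gopp g1) ** Sg = mneg (g ** Tn g1 ** Sg ** Tn g1).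
Proof. by gmdes g; gmring. Qed.
Lemma idQ3 g : adj (g ** Sg ** Tn (gopp g1)) = Tg ** adj Sg ** adj g.
Proof. by gmdes g; gmring. Qed.
Lemma idQ4 g : adj (g ** Tn g1) = adj Tg ** adj g.
Proof. by gmdes g; gmring. Qed.
Lemma idR1 g : gN (gadd (gmul (mc (g ** Sg)) gi_) (md (g ** Sg))) = gN (gadd (gmul (mc g) gi_) (md g)).
Proof. by gmdes g; rewrite /gN /=; ring. Qed.
Lemma idR2 g : g ** Tn gi_ ** Sg = mneg (g ** Sg ** Tn gi_ ** Sg ** Lg ** Twg).
Proof. by gmdes g; gmring. Qed.
Lemma idR3 g : adj (g ** Sg ** Tn gi_) = adj Twg ** adj Sg ** adj g.
Proof. by gmdes g; gmring. Qed.
Lemma idR4 g : adj (g ** Tn gi_) = adj Twg ** adj g.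
Proof. by gmdes g; gmring. Qed.
Lemma idT1 g : gN (gadd (gmul (mc (g ** Lg)) g1) (md (g ** Lg))) = gN (gadd (gmul (mc g) (GI (-1) 0)) (md g)).
Proof. by gmdes g; rewrite /gN /=; ring. Qed.
Lemma idT2 g : gN (gadd (gmul (mc (g ** Lg)) gi_) (md (g ** Lg))) = gN (gadd (gmul (mc g) (GI 0 (-1))) (md g)).
Proof. by gmdes g; rewrite /gN /=; ring. Qed.
Lemma idT3 g : g ** Lg ** Sg = mneg (g ** Sg ** Lg).
Proof. by gmdes g; gmring. Qed.
Lemma det_cd0 g : det1 g -> hc g = 0 -> hd g = 0 -> False.
Proof.
move=> dg /gN_eq0 hc0 /gN_eq0 hd0; move: dg; rewrite /det1 /gdet hc0 hd0.
case: g hc0 hd0 => [[? ?] [? ?] [? ?] [? ?]] /= _ _ [] /=; lia.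
Qed.
Lemma small_int (s : int) : s ^+ 2 <= 1 -> [\/ s = -1, s = 0 | s = 1].
Proof. move=> h. have h1 : -1 <= s by nia. have h2 : s <= 1 by nia.
have : (s == -1) || (s == 0) || (s == 1) by lia.
by case/orP => [/orP [] /eqP|/eqP] ->; [constructor 1|constructor 2|constructor 3].
Qed.

Lemma mmulA x y z : x ** (y ** z) = x ** y ** z.
Proof. by gmdes x; gmdes y; gmdes z; gmring. Qed.
Lemma mmul1 x : x ** m1 = x.
Proof. by gmdes x; gmring. Qed.
Lemma mul1m x : m1 ** x = x.
Proof. by gmdes x; gmring. Qed.
Lemma mmulN x y : x ** mneg y = mneg (x ** y).
Proof. by gmdes x; gmdes y; gmring. Qed.
Definition smul z h := Mk (gmul z (ma h)) (gmul z (mb h)) (gmul z (mc h)) (gmul z (md h)).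
Lemma adjK0 g h : adj g ** (g ** h) = smul (gdet g) h.
Proof. by gmdes g; gmdes h; gmring. Qed.
Lemma smul1 h : smul g1 h = h.
Proof. by gmdes h; gmring. Qed.
Lemma adjK g h : det1 g -> adj g ** (g ** h) = h.
Proof. by rewrite /det1 adjK0 => ->; rewrite smul1. Qed.
Lemma adj1 : adj m1 = m1. Proof. by gmring. Qed.
Lemma hc_m1 : hc m1 = 0. Proof. by rewrite /hc /gN /=; ring. Qed.
Lemma hc_Tn0 n : hc (Tn n) = 0. Proof. by rewrite /hc /gN /=; ring. Qed.
Lemma hc_L0 : hc Lg = 0. Proof. by rewrite /hc /gN /=; ring. Qed.
Lemma det1m1 : det1 m1. Proof. by apply: gi_ext => /=; ring. Qed.

Lemma idG g n : mneg (g ** Tn n ** Sg ** Sg) ** Tn (gopp n) = g.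
Proof. by gmdes g; case: n => *; gmring. Qed.

Lemma unit_cases (a1 a2 d1 d2 : int) : a1 * d1 - a2 * d2 = 1 -> a1 * d2 + a2 * d1 = 0 ->
  [\/ [/\ a1 = 1, a2 = 0, d1 = 1 & d2 = 0], [/\ a1 = -1, a2 = 0, d1 = -1 & d2 = 0],
      [/\ a1 = 0, a2 = 1, d1 = 0 & d2 = -1] | [/\ a1 = 0, a2 = -1, d1 = 0 & d2 = 1]].
Proof.
move=> e1 e2.
have k : (a1 ^+ 2 + a2 ^+ 2) * (d1 ^+ 2 + d2 ^+ 2) = 1.
  rewrite -[1]/(1 ^+ 2 + 0 ^+ 2 : int) -e1 -e2; ring.
have na : a1 ^+ 2 + a2 ^+ 2 = 1.
  have := sqr_ge0 a1; have := sqr_ge0 a2; have := sqr_ge0 d1; have := sqr_ge0 d2.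
  move: k; set A := a1 ^+ 2 + a2 ^+ 2; set D := d1 ^+ 2 + d2 ^+ 2.
  move=> k h1 h2 h3 h4.
  have hA : 0 <= A by rewrite /A; lia.
  have hD : 0 <= D by rewrite /D; lia.
  clearbody A D.
  have D1 : 1 <= D.
    case: (boolP (D == 0)) => [/eqP D0|Dn]; last by lia.
    by move: k; rewrite D0 mulr0.
  have : 0 <= A * (D - 1) by apply: mulr_ge0; lia.
  rewrite mulrBr mulr1 k; lia.
have h1 : a1 ^+ 2 <= 1 by have := sqr_ge0 a2; lia.
have h2 : a2 ^+ 2 <= 1 by have := sqr_ge0 a1; lia.
case: (small_int h1) => ea1; case: (small_int h2) => ea2; subst a1 a2;
  move: na e1 e2; rewrite ?expr2 => na e1 e2; try lia.
- constructor 2; split => //; lia.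
- constructor 4; split => //; lia.
- constructor 3; split => //; lia.
- constructor 1; split => //; lia.
Qed.

Lemma hc_TnS g n : hc (g ** Tn n ** Sg) = gN (gadd (gmul (mc g) n) (md g)).
Proof. by rewrite hc_S /hd md_Tn. Qed.

Lemma gen_ind (Pr : GM -> Prop) : Pr m1 -> (forall x, Pr x -> Pr (x ** Sg)) ->
  (forall x n, Pr x -> Pr (x ** Tn n)) -> (forall x, Pr x -> Pr (x ** Lg)) ->
  (forall x, Pr x -> Pr (mneg x)) -> forall g, det1 g -> Pr g.
Proof.
move=> P1 PS PT PL PN.
suff H : forall k : nat, forall g, det1 g -> (absz (hc g) < k)%N -> Pr g.
  by move=> g dg; apply: (H (absz (hc g)).+1).
elim=> [|k IH] g dg hk //.
case: (boolP (hc g == 0)) => [/eqP h0|hpos].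
  have c0 := gN_eq0 h0.
  move: dg c0; rewrite /det1 /gdet.
  case: g {hk h0} => [[a1 a2] [b1 b2] [c1 c2] [d1 d2]] /= [e1 e2] [ec1 ec2].
  subst c1 c2.
  have e1' : a1 * d1 - a2 * d2 = 1 by move: e1; rewrite /=; lia.
  have e2' : a1 * d2 + a2 * d1 = 0 by move: e2; rewrite /=; lia.
  case: (unit_cases e1' e2') => [[-> -> -> ->]|[-> -> -> ->]|[-> -> -> ->]|[-> -> -> ->]].
  - have -> : Mk (GI 1 0) (GI b1 b2) g0 (GI 1 0) = m1 ** Tn (GI b1 b2) by apply: GM_ext => /=; lia.
    exact: PT.
  - have -> : Mk (GI (-1) 0) (GI b1 b2) g0 (GI (-1) 0) = mneg m1 ** Tn (GI (- b1) (- b2)) by apply: GM_ext => /=; lia.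
    exact/PT/PN.
  - have -> : Mk (GI 0 1) (GI b1 b2) g0 (GI 0 (-1)) = m1 ** Lg ** Tn (GI b2 (- b1)) by apply: GM_ext => /=; lia.
    exact/PT/PL.
  - have -> : Mk (GI 0 (-1)) (GI b1 b2) g0 (GI 0 1) = mneg (m1 ** Lg) ** Tn (GI (- b2) b1) by apply: GM_ext => /=; lia.
    exact/PT/PN/PL.
have a0 := nn_adm (md g) hpos.
set n := nn (mc g) (md g) in a0.
rewrite -(idG g n); apply/PT/PN/PS/IH.
  by repeat (apply: det1M || apply: det1Tn || apply: det1S || assumption).
have := gN_ge0 (gadd (gmul (mc g) n) (md g)).
move: a0 hk; rewrite /adm -hc_TnS -/(hc g) => a0 hk h0.
have := gN_ge0 (mc g); rewrite -/(hc g); lia.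
Qed.

Lemma mmul_adj g : det1 g -> g ** adj g = m1.
Proof.
have -> : g ** adj g = smul (gdet g) m1 by gmdes g; gmring.
by rewrite /det1 => ->; rewrite smul1.
Qed.
Lemma Tn_split n : Tn n = Tn (GI (gre n) 0) ** Tn (GI 0 (gim n)).
Proof. by case: n => *; gmring. Qed.
Lemma Tn_re_succ (m : nat) : Tn (GI (Posz m.+1) 0) = Tn (GI (Posz m) 0) ** Tg.
Proof. apply: GM_ext => /=; lia. Qed.
Lemma Tn_im_succ (m : nat) : Tn (GI 0 (Posz m.+1)) = Tn (GI 0 (Posz m)) ** Twg.
Proof. apply: GM_ext => /=; lia. Qed.
Lemma Tn_re_neg (m : nat) : Tn (GI (Negz m) 0) = adj (Tn (GI (Posz m.+1) 0)).
Proof. apply: GM_ext => /=; rewrite ?NegzE; lia. Qed.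
Lemma Tn_im_neg (m : nat) : Tn (GI 0 (Negz m)) = adj (Tn (GI 0 (Posz m.+1))).
Proof. apply: GM_ext => /=; rewrite ?NegzE; lia. Qed.

Ltac dt := repeat match goal with
 | |- det1 (_ ** _) => apply: det1M
 | |- det1 (mneg _) => apply: det1N
 | |- det1 (adj _) => apply: det1adj
 | |- det1 (Tn _) => apply: det1Tn
 | |- det1 Sg => exact: det1S
 | |- det1 Lg => exact: det1L
 | |- det1 Twg => exact: det1Tn
 | |- det1 Tg => exact: det1Tn
 end; try assumption.

Section Psi.
Variable V : zmodType.
Variable act : V -> GM -> V.
Hypothesis actD : forall u v g, act (u + v) g = act u g + act v g.
Hypothesis actM : forall v g h, act (act v g) h = act v (g ** h).
Hypothesis act1 : forall v, act v m1 = v.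
Hypothesis actN : forall v g, act v (mneg g) = act v g.
Variable P : V.
Hypothesis hS : P + act P Sg = 0.
Hypothesis hL : P - act P Lg = 0.
Hypothesis hU : P + act P (Tg ** Sg) + act P ((Tg ** Sg) ** (Tg ** Sg)) = 0.
Hypothesis hE : P + act P (Twg ** Sg ** Lg) + act P ((Twg ** Sg ** Lg) ** (Twg ** Sg ** Lg)) = 0.

Lemma act0 g : act 0 g = 0.
Proof. by apply: (@addrI _ (act 0 g)); rewrite -actD !addr0. Qed.
Lemma actNv v g : act (- v) g = - act v g.
Proof. by apply/eqP; rewrite -addr_eq0 -actD addNr act0. Qed.
Lemma actB u v g : act (u - v) g = act u g - act v g.
Proof. by rewrite actD actNv. Qed.

Lemma PS : act P Sg = - P.
Proof. by apply/eqP; rewrite -addr_eq0 addrC hS. Qed.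
Lemma PL : act P Lg = P.
Proof. by apply/eqP; rewrite eq_sym -subr_eq0 hL. Qed.
Lemma PadjS : act P (adj Sg) = - P.
Proof. have -> : adj Sg = mneg Sg by gmring. by rewrite actN PS. Qed.
Lemma PadjL : act P (adj Lg) = P.
Proof. have -> : adj Lg = mneg Lg by gmring. by rewrite actN PL. Qed.

Lemma RT Y : act P Y + act P (Tg ** adj Sg ** Y) - act P (adj Tg ** Y) = 0.
Proof.
rewrite -(actM P (Tg ** adj Sg) Y) -(actM P (adj Tg) Y) -actD -actB.
have -> : act P (Tg ** adj Sg) = act P (Tg ** Sg).
  by have -> : Tg ** adj Sg = mneg (Tg ** Sg) by gmring. 
have -> : act P (adj Tg) = - act P ((Tg ** Sg) ** (Tg ** Sg)).
  have -> : (Tg ** Sg) ** (Tg ** Sg) = mneg (adj Sg ** adj Tg) by gmring.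
  by rewrite actN -actM PadjS actNv opprK.
by rewrite opprK hU act0.
Qed.

Lemma RTw Y : act P Y + act P (adj Twg ** adj Sg ** Y) - act P (adj Twg ** Y) = 0.
Proof.
rewrite -(actM P (adj Twg ** adj Sg) Y) -(actM P (adj Twg) Y) -actD -actB.
have -> : act P (adj Twg ** adj Sg) = act P (Twg ** Sg ** Lg).
  have -> : Twg ** Sg ** Lg = Lg ** (adj Twg ** adj Sg) by gmring.
  by rewrite -(actM P Lg) PL.
have -> : act P (adj Twg) = - act P ((Twg ** Sg ** Lg) ** (Twg ** Sg ** Lg)).
  have -> : (Twg ** Sg ** Lg) ** (Twg ** Sg ** Lg) = adj Lg ** adj Sg ** adj Twg by gmring.
  by rewrite -!actM PadjL PadjS actNv opprK.
by rewrite opprK hE act0.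
Qed.

Fixpoint psif (f : nat) (g : GM) : V :=
  match f with
  | O => 0
  | S f' => if gN (mc g) == 0 then 0 else
      let n := nn (mc g) (md g) in
      psif f' (g ** Tn n ** Sg) + act P (adj (g ** Tn n))
  end.
Definition ht g := absz (hc g).
Definition Psi g := psif (ht g).+1 g.


Lemma psif_eq f1 f2 g : (ht g < f1)%N -> (ht g < f2)%N -> psif f1 g = psif f2 g.
Proof.
elim: f1 f2 g => [|f1 IH] [|f2] g //= h1 h2.
case: ifP => // /negbT hN; congr (_ + _); apply: IH.
- have := nn_adm (md g) hN. rewrite /adm /ht hc_TnS -/(hc g) => h.
  have := gN_ge0 (gadd (gmul (mc g) (nn (mc g) (md g))) (md g)). move: h1 h. rewrite /ht. lia.
- have := nn_adm (md g) hN. rewrite /adm /ht hc_TnS -/(hc g) => h.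
  have := gN_ge0 (gadd (gmul (mc g) (nn (mc g) (md g))) (md g)). move: h2 h. rewrite /ht. lia.
Qed.

Lemma Psi_unfold g : Psi g = if hc g == 0 then 0 else
   Psi (g ** Tn (nn (mc g) (md g)) ** Sg) + act P (adj (g ** Tn (nn (mc g) (md g)))).
Proof.
rewrite {1}/Psi /= /hc; case: ifP => // /negbT hN; congr (_ + _); apply: psif_eq => //.
have := nn_adm (md g) hN. rewrite /adm /ht hc_TnS /hc => h.
have := gN_ge0 (gadd (gmul (mc g) (nn (mc g) (md g))) (md g)). move: h. lia.
Qed.

Lemma Psi0 g : hc g = 0 -> Psi g = 0.
Proof. by move=> h; rewrite Psi_unfold h eqxx. Qed.

Lemma hc_ge0 g : 0 <= hc g. Proof. exact: gN_ge0. Qed.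
Lemma hd_ge0 g : 0 <= hd g. Proof. exact: gN_ge0. Qed.


Lemma solve3 (a A B : V) : a + A - B = 0 -> a = B - A.
Proof. by move/eqP; rewrite subr_eq0 => /eqP <-; rewrite addrK. Qed.
Lemma zl1 (x A B : V) : x + B - (B - A) = x + A.
Proof. by rewrite opprB -addrA [B + _]addrC addrNK. Qed.

Definition Iprop g := (forall n, Psi (g ** Tn n) = Psi g) /\ Psi (g ** Lg) = Psi g /\ Psi (mneg g) = Psi g.
Definition Eprop g := Psi (g ** Sg) = Psi g - act P (adj g).
Definition phi g n := Psi (g ** Tn n ** Sg) + act P (adj (g ** Tn n)).
Definition Aprop g := forall n, adm (mc g) (md g) n -> Psi g = phi g n.
Definition IHP (h : int) := (forall g, det1 g -> hc g < h -> Iprop g) /\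
  (forall g, det1 g -> hc g < h -> hd g < h -> Eprop g).

Lemma step1 h g n : IHP h -> det1 g -> hc g = h -> adm (mc g) (md g) n ->
  adm (mc g) (md g) (gadd n g1) -> phi g n = phi g (gadd n g1).
Proof.
move=> [IHI IHE] dg hg an an1; rewrite /adm in an an1.
have d1' : det1 (g ** Tn n ** Sg) by dt.
have hg1' : hc (g ** Tn n ** Sg) < h by rewrite hc_TnS -hg.
have e2 := idA g n.
have hk : hc (g ** Tn n ** Sg ** Tn (gopp g1) ** Sg ** Tn (gopp g1)) < h.
  by rewrite -hc_N -e2 hc_TnS -hg.
have hk' : hc (g ** Tn n ** Sg ** Tn (gopp g1) ** Sg) < h.
  by rewrite -(hc_Tn _ (gopp g1)).
have hd1 : hd (g ** Tn n ** Sg ** Tn (gopp g1)) < h.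
  rewrite idB.
  by rewrite -hg.
have hc1 : hc (g ** Tn n ** Sg ** Tn (gopp g1)) < h by rewrite hc_Tn.
have E1 := IHE _ (det1M d1' (det1Tn _)) hc1 hd1.
rewrite /phi e2.
have [_ [_ ->]] := IHI _ (det1M (det1M (det1M d1' (det1Tn _)) det1S) (det1Tn _)) hk.
have [-> _] := IHI _ (det1M (det1M d1' (det1Tn _)) det1S) hk'.
rewrite E1.
have [-> _] := IHI _ d1' hg1'.
rewrite idC idD.
rewrite (solve3 (RT (adj (g ** Tn n)))).
by rewrite [_ - act P (Tg ** _ ** _)]addrC addrA.
Qed.

Lemma stepi h g n : IHP h -> det1 g -> hc g = h -> adm (mc g) (md g) n ->
  adm (mc g) (md g) (gadd n gi_) -> phi g n = phi g (gadd n gi_).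
Proof.
move=> [IHI IHE] dg hg an an1; rewrite /adm in an an1.
have d1' : det1 (g ** Tn n ** Sg) by dt.
have hg1' : hc (g ** Tn n ** Sg) < h by rewrite hc_TnS -hg.
have e2 := idAi g n.
have hk : hc (g ** Tn n ** Sg ** Twg ** Sg ** Lg ** Twg) < h.
  by rewrite -hc_N -e2 hc_TnS -hg.
have hk1 : hc (g ** Tn n ** Sg ** Twg ** Sg ** Lg) < h.
  by rewrite -(hc_Tn _ gi_).
have hk2 : hc (g ** Tn n ** Sg ** Twg ** Sg) < h.
  by rewrite -hc_L.
have hd1 : hd (g ** Tn n ** Sg ** Twg) < h.
  rewrite idBi.
  by rewrite -hg.
have hc1 : hc (g ** Tn n ** Sg ** Twg) < h by rewrite /Twg hc_Tn.
have E1 := IHE _ (det1M d1' (det1Tn _)) hc1 hd1.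
rewrite /phi e2.
have [_ [_ ->]] := IHI _ (det1M (det1M (det1M (det1M d1' (det1Tn _)) det1S) det1L) (det1Tn _)) hk.
have [H _] := IHI _ (det1M (det1M (det1M d1' (det1Tn _)) det1S) det1L) hk1.
rewrite (H gi_).
have [_ [-> _]] := IHI _ (det1M (det1M d1' (det1Tn _)) det1S) hk2.
rewrite E1.
have [H2 _] := IHI _ d1' hg1'.
rewrite (H2 gi_).
rewrite idCi idDi.
rewrite (solve3 (RTw (adj (g ** Tn n)))).
by rewrite [_ - act P (adj Twg ** _ ** _)]addrC addrA.
Qed.

Lemma ustep h g n s t : IHP h -> det1 g -> hc g = h -> adm (mc g) (md g) n ->
  adm (mc g) (md g) (gadd n (GI s t)) -> s ^+ 2 + t ^+ 2 = 1 -> phi g n = phi g (gadd n (GI s t)).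
Proof.
move=> IH dg hg an ant hst.
have hs : s ^+ 2 <= 1 by nia. have ht' : t ^+ 2 <= 1 by nia.
case: (small_int hs) => -> in ant hst *; case: (small_int ht') => -> in ant hst *;
  try (exfalso; move: hst; clear; nia).
- rewrite -{1}(gaddA0 n); symmetry; apply: (step1 IH) => //; by rewrite gaddA0.
- rewrite -{1}(gaddB0 n); symmetry; apply: (stepi IH) => //; by rewrite gaddB0.
- exact: (stepi IH).
- exact: (step1 IH).
Qed.

Lemma stepA h g : IHP h -> det1 g -> hc g = h -> Aprop g.
Proof.
move=> IH dg hg n an.
have hpos : hc g != 0.
  have := gN_ge0 (gadd (gmul (mc g) n) (md g)). move: an; rewrite /adm -/(hc g). lia.
rewrite Psi_unfold (negbTE hpos) -/(phi g _).
have a0 := nn_adm (md g) hpos.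
set n0 := nn (mc g) (md g) in a0 *.
have [bx by'] := adm_dist a0 an.
rewrite (gadd_diff n0 n) in an *.
move: an bx by'; set s := gre n - gre n0; set t := gim n - gim n0; clearbody s t => an bx by'.
case: (boolP (s ^+ 2 + t ^+ 2 == 0)) => [/eqP z|nz].
  have s0 : s = 0 by nia. have t0 : t = 0 by nia.
  by rewrite s0 t0 gadd00.
case: (boolP (s ^+ 2 + t ^+ 2 == 1)) => [/eqP o|no].
  exact: (ustep IH).
have s1 : s ^+ 2 = 1.
  have := sqr_ge0 s; have := sqr_ge0 t; move: nz no bx by'.
  set a := s ^+ 2; set b := t ^+ 2; clearbody a b; lia.
have t1 : t ^+ 2 = 1.
  have := sqr_ge0 s; have := sqr_ge0 t; move: nz no bx by'.
  set a := s ^+ 2; set b := t ^+ 2; clearbody a b; lia.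
case: (adm_mid a0 an) => hm.
- rewrite (ustep (s := s) (t := 0) IH) //; last by rewrite s1 expr2 mulr0 addr0.
  rewrite -(gadd_st n0 s t); apply: (ustep IH) => //; first by rewrite gadd_st.
  by rewrite t1 expr2 mulr0 add0r.
- rewrite (ustep (s := 0) (t := t) IH) //; last by rewrite t1 expr2 mulr0 add0r.
  rewrite -(gadd_ts n0 s t); apply: (ustep IH) => //; first by rewrite gadd_ts.
  by rewrite s1 expr2 mulr0 addr0.
Qed.

Lemma stepI h g : IHP h -> det1 g -> hc g = h -> Aprop g -> Iprop g.
Proof.
move=> [IHI IHE] dg hg A.
case: (boolP (hc g == 0)) => [/eqP h0|hpos].
  split; [move=> n|split].
  - by rewrite (Psi0 (etrans (hc_Tn g n) h0)) (Psi0 h0).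
  - by rewrite (Psi0 (etrans (hc_L g) h0)) (Psi0 h0).
  - by rewrite (Psi0 (etrans (hc_N g) h0)) (Psi0 h0).
split; [|split].
- move=> m; rewrite (Psi_unfold (g ** Tn m)) hc_Tn (negbTE hpos).
  have hp' : gN (mc (g ** Tn m)) != 0 by rewrite -/(hc _) hc_Tn.
  have a' := nn_adm (md (g ** Tn m)) hp'.
  set n' := nn (mc (g ** Tn m)) (md (g ** Tn m)) in a' *.
  have am : adm (mc g) (md g) (gadd m n').
    by move: a'; rewrite /adm idI1 mc_Tn; apply.
  by rewrite (A _ am) /phi idI2.
- rewrite (Psi_unfold (g ** Lg)) hc_L (negbTE hpos).
  have hp' : gN (mc (g ** Lg)) != 0 by rewrite -/(hc _) hc_L.
  have a' := nn_adm (md (g ** Lg)) hp'.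
  set n' := nn (mc (g ** Lg)) (md (g ** Lg)) in a' *.
  have am : adm (mc g) (md g) (gopp n').
    by move: a'; rewrite /adm idL1 -/(hc (g ** Lg)) hc_L /hc; apply.
  rewrite idL2 idL3.
  have dy : det1 (g ** Tn (gopp n') ** Sg) by dt.
  have hy : hc (g ** Tn (gopp n') ** Sg) < h by rewrite hc_TnS -hg.
  have dyL : det1 (g ** Tn (gopp n') ** Sg ** Lg) by dt.
  have hyL : hc (g ** Tn (gopp n') ** Sg ** Lg) < h by rewrite hc_L.
  have [_ [_ ->]] := IHI _ dyL hyL.
  have [_ [-> _]] := IHI _ dy hy.
  rewrite -(actM P (adj Lg)) PadjL.
  by rewrite (A _ am).
- rewrite (Psi_unfold (mneg g)) hc_N (negbTE hpos).
  have hp' : gN (mc (mneg g)) != 0 by rewrite -/(hc _) hc_N.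
  have a' := nn_adm (md (mneg g)) hp'.
  set n' := nn (mc (mneg g)) (md (mneg g)) in a' *.
  have am : adm (mc g) (md g) n'.
    by move: a'; rewrite /adm idN1 -/(hc (mneg g)) hc_N /hc; apply.
  rewrite idN2 idN3 actN.
  have dy : det1 (g ** Tn n' ** Sg) by dt.
  have hy : hc (g ** Tn n' ** Sg) < h by rewrite hc_TnS -hg.
  have [_ [_ ->]] := IHI _ dy hy.
  by rewrite (A _ am).
Qed.

Lemma E_lt g : Aprop g -> hd g < hc g -> Eprop g.
Proof.
move=> A hlt.
have a0 : adm (mc g) (md g) g0 by rewrite /adm idE0.
by rewrite /Eprop (A _ a0) /phi idE0' addrK.
Qed.

Lemma E_gt g : hc g < hd g -> Aprop (g ** Sg) -> Psi (mneg g) = Psi g -> Eprop g.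
Proof.
move=> hlt AS HN.
have hh : hd (g ** Sg) < hc (g ** Sg) by rewrite hd_S hc_S.
have E := E_lt AS hh.
rewrite /Eprop idSS HN adjM -actM PadjS actNv opprK in E.
by rewrite /Eprop E addrK.
Qed.

Lemma E_eq1 h g : IHP h -> det1 g -> hc g = h -> hd g = h -> Aprop g -> Aprop (g ** Sg) ->
  adm (mc g) (md g) g1 -> Eprop g.
Proof.
move=> [IHI _] dg hg hdg A AS a1.
have aS : adm (mc (g ** Sg)) (md (g ** Sg)) (gopp g1).
  rewrite /adm idQ1 -/(hc (g ** Sg)) hc_S hdg -hg; exact: a1.
rewrite /Eprop (AS _ aS) (A _ a1) /phi idQ2.
have dy : det1 (g ** Tn g1 ** Sg) by dt.
have hy : hc (g ** Tn g1 ** Sg) < h by rewrite hc_TnS -hg; exact: a1.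
have dy1 : det1 (g ** Tn g1 ** Sg ** Tn g1) by dt.
have hy1 : hc (g ** Tn g1 ** Sg ** Tn g1) < h by rewrite hc_Tn.
have [_ [_ ->]] := IHI _ dy1 hy1.
have [-> _] := IHI _ dy hy.
by rewrite (idQ3 g) (idQ4 g) (solve3 (RT (adj g))) zl1.
Qed.

Lemma E_eqi h g : IHP h -> det1 g -> hc g = h -> hd g = h -> Aprop g -> Aprop (g ** Sg) ->
  adm (mc g) (md g) gi_ -> Eprop g.
Proof.
move=> [IHI _] dg hg hdg A AS ai.
have aS : adm (mc (g ** Sg)) (md (g ** Sg)) gi_.
  rewrite /adm idR1 -/(hc (g ** Sg)) hc_S hdg -hg; exact: ai.
rewrite /Eprop (AS _ aS) (A _ ai) /phi (idR2 g).
have hy0 : hc (g ** Tn gi_ ** Sg) < h by rewrite hc_TnS -hg; exact: ai.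
have hy2 : hc (g ** Sg ** Tn gi_ ** Sg ** Lg ** Twg) < h by rewrite -hc_N -idR2.
have hy1 : hc (g ** Sg ** Tn gi_ ** Sg ** Lg) < h by rewrite -(hc_Tn _ gi_).
have hy : hc (g ** Sg ** Tn gi_ ** Sg) < h by rewrite -hc_L.
have dy : det1 (g ** Sg ** Tn gi_ ** Sg) by dt.
have dy1 : det1 (g ** Sg ** Tn gi_ ** Sg ** Lg) by dt.
have dy2 : det1 (g ** Sg ** Tn gi_ ** Sg ** Lg ** Twg) by dt.
have [_ [_ ->]] := IHI _ dy2 hy2.
have [H _] := IHI _ dy1 hy1. rewrite (H gi_).
have [_ [-> _]] := IHI _ dy hy.
by rewrite (idR3 g) (idR4 g) (solve3 (RTw (adj g))) zl1.
Qed.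

Lemma E_viaL g : Iprop g -> Iprop (g ** Sg ** Lg) -> Iprop (g ** Sg) -> Eprop (g ** Lg) -> Eprop g.
Proof.
move=> [_ [Ig _]] [_ [_ Ig2]] [_ [Ig1 _]] E.
by rewrite /Eprop idT3 Ig2 Ig1 Ig adjM -actM PadjL in E.
Qed.

Lemma stepE h g : IHP h -> (forall g', det1 g' -> hc g' = h -> Aprop g' /\ Iprop g') ->
  det1 g -> hc g <= h -> hd g <= h -> Eprop g.
Proof.
move=> IH HA dg hc1 hd1; have [IHI IHE] := IH.
case: (boolP ((hc g < h) && (hd g < h))) => [/andP[? ?]|nb]; first by apply: IHE.
case: (boolP (hd g < hc g)) => c1.
  have hg : hc g = h by move: nb; lia.
  exact: E_lt (HA _ dg hg).1 c1.
case: (boolP (hc g < hd g)) => c2.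
  have hg : hd g = h by move: nb; lia.
  have hcl : hc g < h by lia.
  apply: E_gt c2 (HA _ (det1M dg det1S) _).1 (IHI _ dg hcl).2.2.
  by rewrite hc_S.
have hg : hc g = h by move: nb c1 c2; lia.
have hdg : hd g = h by move: nb c1 c2; lia.
case: (boolP (h == 0)) => [/eqP h0|hpos].
  by exfalso; apply: (det_cd0 dg); rewrite ?hg ?hdg h0.
have dS : det1 (g ** Sg) by dt.
have hS' : hc (g ** Sg) = h by rewrite hc_S.
have dL : det1 (g ** Lg) by dt.
have hL' : hc (g ** Lg) = h by rewrite hc_L.
have hdL : hd (g ** Lg) = h by rewrite hd_L.
have dLS : det1 (g ** Lg ** Sg) by dt.
have hLS : hc (g ** Lg ** Sg) = h by rewrite hc_S.
have dSL : det1 (g ** Sg ** Lg) by dt.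
have hSL : hc (g ** Sg ** Lg) = h by rewrite hc_L.
have eN : gN (mc g) = gN (md g) by rewrite -/(hc g) -/(hd g) hg hdg.
have pN : 0 < gN (mc g) by rewrite -/(hc g) hg lt0r hpos /= -hg hc_ge0.
case: (unit_adm eN pN) => au.
- exact: (E_eq1 IH dg hg hdg (HA _ dg hg).1 (HA _ dS hS').1 au).
- apply: E_viaL; [exact: (HA _ dg hg).2 | exact: (HA _ dSL hSL).2 | exact: (HA _ dS hS').2 |].
  apply: (E_eq1 IH dL hL' hdL (HA _ dL hL').1 (HA _ dLS hLS).1).
  by rewrite /adm idT1 -/(hc (g ** Lg)) hc_L; exact: au.
- exact: (E_eqi IH dg hg hdg (HA _ dg hg).1 (HA _ dS hS').1 au).
- apply: E_viaL; [exact: (HA _ dg hg).2 | exact: (HA _ dSL hSL).2 | exact: (HA _ dS hS').2 |].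
  apply: (E_eqi IH dL hL' hdL (HA _ dL hL').1 (HA _ dLS hLS).1).
  by rewrite /adm idT2 -/(hc (g ** Lg)) hc_L; exact: au.
Qed.

Lemma IHall (n : nat) : IHP n%:Z.
Proof.
elim: n => [|n IHn].
  by split => [g _ hlt|g _ hlt _]; have := hc_ge0 g; lia.
have HA : forall g, det1 g -> hc g = n -> Aprop g /\ Iprop g.
  move=> g dg hg; have A := stepA IHn dg hg; split=> //; exact: stepI IHn dg hg A.
split.
- move=> g dg hlt; case: (boolP (hc g < n)) => h'.
    by case: IHn => I _; exact: I.
  have hg : hc g = n by lia.
  exact: (HA g dg hg).2.
- move=> g dg hc' hd'; apply: (stepE IHn HA dg); lia.
Qed.

Lemma IE g : det1 g -> Iprop g /\ Eprop g.
Proof.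
move=> dg; have [I E] := IHall (absz (hc g + hd g)).+1.
have := hc_ge0 g; have := hd_ge0 g => h1 h2.
split; [apply: I | apply: E] => //; lia.
Qed.

Lemma Psi_m1 : Psi m1 = 0. Proof. exact: Psi0 hc_m1. Qed.

Lemma Qlem h : det1 h -> forall g, det1 g -> Psi (g ** h) = Psi g + act (Psi h) (adj g).
Proof.
move=> dh.
suff G : forall h, det1 h -> det1 h /\ (forall g, det1 g -> Psi (g ** h) = Psi g + act (Psi h) (adj g)).
  exact: (G h dh).2.
apply: (gen_ind (Pr := fun h => det1 h /\ (forall g, det1 g -> Psi (g ** h) = Psi g + act (Psi h) (adj g)))).
- split; [exact: det1m1| move=> g dg; rewrite mmul1 Psi_m1 act0 addr0 //].
- move=> x [dx IHx]; split; first by dt.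
  move=> g dg; rewrite mmulA.
  have [_ Egx] := IE (det1M dg dx). rewrite Egx IHx //.
  have [_ Ex] := IE dx. rewrite Ex actB actM adjM.
  by rewrite addrA.
- move=> x n [dx IHx]; split; first by dt.
  move=> g dg; rewrite mmulA.
  have [[IT _] _] := IE (det1M dg dx). rewrite IT IHx //.
  have [[IT' _] _] := IE dx. by rewrite IT'.
- move=> x [dx IHx]; split; first by dt.
  move=> g dg; rewrite mmulA.
  have [[_ [IL _]] _] := IE (det1M dg dx). rewrite IL IHx //.
  have [[_ [IL' _]] _] := IE dx. by rewrite IL'.
- move=> x [dx IHx]; split; first by dt.
  move=> g dg; rewrite mmulN.
  have [[_ [_ IN]] _] := IE (det1M dg dx). rewrite IN IHx //.
  have [[_ [_ IN']] _] := IE dx. by rewrite IN'.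
Qed.

Definition F g := act (Psi g) g.

Lemma F_cocycle g h : det1 g -> det1 h -> F (g ** h) = act (F g) h + F h.
Proof.
move=> dg dh; rewrite /F (Qlem dh dg) actD actM actM.
by rewrite (adjK _ dg).
Qed.
Lemma F_neg g : det1 g -> F (mneg g) = F g.
Proof. by move=> dg; rewrite /F actN; have [[_ [_ ->]] _] := IE dg. Qed.
Lemma F_Tn n : F (Tn n) = 0.
Proof. by rewrite /F (Psi0 (hc_Tn0 n)) act0. Qed.
Lemma F_L : F Lg = 0.
Proof. by rewrite /F (Psi0 hc_L0) act0. Qed.
Lemma F_S : F Sg = P.
Proof.
have [_ E] := IE det1m1.
rewrite /F -{1}(mul1m Sg) E Psi_m1 adj1 act1 sub0r actNv PS opprK //.
Qed.

Lemma main_exists : exists F : GM -> V,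
  [/\ (forall g h, det1 g -> det1 h -> F (g ** h) = act (F g) h + F h),
      (forall g, det1 g -> F (mneg g) = F g),
      (forall n, F (Tn n) = 0), F Lg = 0 & F Sg = P].
Proof.
exists F; split; [exact: F_cocycle | exact: F_neg | exact: F_Tn | exact: F_L | exact: F_S].
Qed.
End Psi.

Section Conc.
Variable R : realType.
Local Open Scope complex_scope.
Local Notation C := R[i].

Definition gi2c (x : gi) : C := Complex (gre x)%:~R (gim x)%:~R.

Lemma gi2c_add x y : gi2c (gadd x y) = gi2c x + gi2c y.
Proof. by rewrite /gi2c /= !intrD. Qed.
Lemma gi2c_mul x y : gi2c (gmul x y) = gi2c x * gi2c y.
Proof. by rewrite /gi2c /= !(intrD, intrM, intrN). Qed.
Lemma gi2c_opp x : gi2c (gopp x) = - gi2c x.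
Proof. by rewrite /gi2c /= !intrN. Qed.
Lemma gi2c0 : gi2c g0 = 0. Proof. by []. Qed.
Lemma gi2c1 : gi2c g1 = 1. Proof. by []. Qed.
Lemma gi2ci : gi2c gi_ = 'i. Proof. by []. Qed.
Lemma gi2c_inj x y : gi2c x = gi2c y -> x = y.
Proof.
case: x y => [a b] [c d]; rewrite /gi2c /= => h.
have h1 : (a%:~R : R) = c%:~R by case: h.
have h2 : (b%:~R : R) = d%:~R by case: h.
by rewrite (intr_inj h1) (intr_inj h2).
Qed.

Lemma mx2E (a b c d : C) (i j : 'I_2) : mx2 a b c d i j =
  if val i == 0%N then (if val j == 0%N then a else b) else (if val j == 0%N then c else d).
Proof. by rewrite mxE. Qed.

Lemma mx2_mul (a b c d a' b' c' d' : C) :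
  mx2 a b c d *m mx2 a' b' c' d' = mx2 (a * a' + b * c') (a * b' + b * d') (c * a' + d * c') (c * b' + d * d').
Proof.
apply/matrixP => i j; rewrite !mxE big_ord_recl big_ord1 !mxE.
by case: i => [[|[|?]] ?] //=; case: j => [[|[|?]] ?].
Qed.

Lemma mx2_eq (x : 'M[C]_2) : x = mx2 (x 0 0) (x 0 1) (x 1 0) (x 1 1).
Proof.
apply/matrixP => i j; rewrite mxE.
case: i => [[|[|?]] hi] //=; case: j => [[|[|?]] hj] //=; congr (x _ _); exact: val_inj.
Qed.

Lemma det_mx2 (a b c d : C) : \det (mx2 a b c d) = a * d - b * c.
Proof.
rewrite (expand_det_row _ 0) big_ord_recl big_ord1 /cofactor !det_mx11 !mxE /=.
by rewrite /bump /= expr0 expr1 mul1r mulN1r mulrN.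
Qed.

Definition io (g : GM) : 'M[C]_2 := mx2 (gi2c (ma g)) (gi2c (mb g)) (gi2c (mc g)) (gi2c (md g)).

Lemma ioM g h : io (g ** h) = io g *m io h.
Proof. by rewrite /io mx2_mul /= !(gi2c_add, gi2c_mul). Qed.

Definition Hh (n : nat) (u v p : {poly C}) : {poly C} :=
  \sum_(l < n.+1) p`_l *: (u ^+ l * v ^+ (n - l)).

Lemma HhD n (u v p q : {poly C}) : Hh n u v (p + q) = Hh n u v p + Hh n u v q.
Proof. by rewrite /Hh -big_split /=; apply: eq_bigr => l _; rewrite coefD scalerDl. Qed.
Lemma HhZ n (u v : {poly C}) (a : C) (p : {poly C}) : Hh n u v (a *: p) = a *: Hh n u v p.
Proof. by rewrite /Hh scaler_sumr; apply: eq_bigr => l _; rewrite coefZ scalerA. Qed.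
Lemma HhS n (u v p : {poly C}) : (size p <= n.+1)%N -> Hh n.+1 u v p = v * Hh n u v p.
Proof.
move=> sp; rewrite /Hh big_ord_recr /= nth_default // scale0r addr0.
rewrite mulr_sumr; apply: eq_bigr => l _ /=.
have hl : (l <= n)%N by rewrite -ltnS.
by rewrite -scalerAr subSn // exprS mulrCA.
Qed.
Lemma HhX n (u v p : {poly C}) : (size p <= n.+1)%N -> Hh n.+1 u v ('X * p) = u * Hh n u v p.
Proof.
move=> sp; rewrite /Hh big_ord_recl coefXM /= scale0r add0r mulr_sumr.
apply: eq_bigr => l _ /=.
by rewrite coefXM /= subSS -scalerAr exprS mulrA.
Qed.
Lemma Hh0 (u v p : {poly C}) : Hh 0 u v p = p`_0 *: 1.
Proof. by rewrite /Hh big_ord1 /= expr0 mulr1. Qed.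

Lemma size_lin (a b : C) (p : {poly C}) : (size ((a *: 'X + b%:P) * p)%R <= (size p).+1)%N.
Proof.
have sq : (size (a *: 'X + b%:P)%R <= 2)%N.
  apply: (leq_trans (size_polyD _ _)); rewrite geq_max.
  rewrite (leq_trans (size_scale_leq _ _)) ?size_polyX //.
  exact: (leq_trans (size_polyC_leq1 _)).
apply: (leq_trans (size_mul_leq _ _)).
move: sq; set x := size (a *: 'X + b%:P)%R; set y := size p; clearbody x y => sq; lia.
Qed.

Lemma size_powl (a b : C) j : (size ((a *: 'X + b%:P) ^+ j)%R <= j.+1)%N.
Proof.
elim: j => [|j IH]; first by rewrite expr0 size_poly1.
by rewrite exprS (leq_trans (size_lin _ _ _)).
Qed.

Lemma size_prod (a b c e : C) i j :
  (size ((a *: 'X + b%:P) ^+ i * (c *: 'X + e%:P) ^+ j)%R <= (i + j).+1)%N.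
Proof.
elim: i => [|i IH]; first by rewrite expr0 mul1r add0n size_powl.
by rewrite exprS -mulrA (leq_trans (size_lin _ _ _)).
Qed.

Lemma Hlin n (u v : {poly C}) (a b : C) (p : {poly C}) : (size p <= n.+1)%N ->
  Hh n.+1 u v ((a *: 'X + b%:P) * p) = (a *: u + b *: v) * Hh n u v p.
Proof.
move=> sp; rewrite mulrDl -scalerAl mul_polyC HhD !HhZ HhX // HhS //.
by rewrite mulrDl -!scalerAl.
Qed.

Lemma Hprod (u v : {poly C}) (a b c e : C) i j :
  Hh (i + j) u v ((a *: 'X + b%:P) ^+ i * (c *: 'X + e%:P) ^+ j) =
  (a *: u + b *: v) ^+ i * (c *: u + e *: v) ^+ j.
Proof.
elim: i => [|i IHi].
  rewrite !expr0 !mul1r add0n; elim: j => [|j IHj].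
    by rewrite !expr0 Hh0 coef1 /= scale1r.
  by rewrite !exprS Hlin ?IHj ?size_powl.
by rewrite !exprS -!mulrA addSn Hlin ?IHi // size_prod.
Qed.

Lemma lin_comb (a b a' b' c' e' : C) :
  a *: (a' *: 'X + b'%:P) + b *: (c' *: 'X + e'%:P) = (a * a' + b * c') *: 'X + (a * b' + b * e')%:P.
Proof.
rewrite !scalerDr !scalerA !scale_polyC scalerDl polyCD.
by rewrite addrACA.
Qed.

Variable k : nat.

Definition Amx (g : 'M[C]_2) : 'M[C]_k.+1 :=
  \matrix_(i < k.+1, m < k.+1) (slash_factor k (g 0 0) (g 0 1) (g 1 0) (g 1 1) i)`_m.
Definition cmx (g : 'M[C]_2) : 'M[C]_2 := map_mx conjc g.

Lemma mulmx2E (g h : 'M[C]_2) i j : (g *m h) i j = g i 0 * h 0 j + g i 1 * h 1 j.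
Proof.
rewrite mxE big_ord_recl big_ord1.
by have -> : lift ord0 (@ord0 0) = 1 :> 'I_2 by apply: val_inj.
Qed.

Lemma AmxM (g h : 'M[C]_2) : Amx (g *m h) = Amx g *m Amx h.
Proof.
apply/matrixP => i m; rewrite [LHS]mxE [RHS]mxE.
set u := h 0 0 *: 'X + (h 0 1)%:P; set v := h 1 0 *: 'X + (h 1 1)%:P.
have -> : \sum_j Amx g i j * Amx h j m = (Hh k u v (slash_factor k (g 0 0) (g 0 1) (g 1 0) (g 1 1) i))`_m.
  rewrite /Hh coef_sum; apply: eq_bigr => l _; by rewrite !mxE coefZ.
have hi : (i <= k)%N by rewrite -ltnS.
have e : Hh k u v = Hh (i + (k - i)) u v by rewrite subnKC.
rewrite e /slash_factor Hprod /u /v !lin_comb.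
by rewrite !mulmx2E.
Qed.

Lemma cmxM (g h : 'M[C]_2) : cmx (g *m h) = cmx g *m cmx h.
Proof. exact: map_mxM. Qed.

Lemma slashE (P : Vkk R k) (g : 'M[C]_2) : slash P g = (Amx g)^T *m P *m Amx (cmx g).
Proof.
apply/matrixP => m n; rewrite !mxE.
under [RHS]eq_bigr => j _ do rewrite !mxE big_distrl /=.
rewrite exchange_big /=; apply: eq_bigr => i _; apply: eq_bigr => j _.
rewrite !mxE; congr (_ * _); exact: mulrC.
Qed.

Lemma slash_act (P : Vkk R k) (g h : 'M[C]_2) : slash (slash P g) h = slash P (g *m h).
Proof. by rewrite !slashE cmxM !AmxM !trmx_mul !mulmxA. Qed.

Lemma slashD (P Q : Vkk R k) (g : 'M[C]_2) : slash (P + Q) g = slash P g + slash Q g.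
Proof. by rewrite !slashE mulmxDr mulmxDl. Qed.
Lemma slashZ (a : C) (P : Vkk R k) (g : 'M[C]_2) : slash (a *: P) g = a *: slash P g.
Proof. by rewrite !slashE -scalemxAr -scalemxAl. Qed.

Lemma Amx1 : Amx 1%:M = 1%:M.
Proof.
apply/matrixP => i m; rewrite !mxE /slash_factor ?mxE /=.
rewrite scale1r scale0r addr0 add0r expr1n mulr1 coefXn.
by rewrite eq_sym.
Qed.

Lemma slash1 (P : Vkk R k) : slash P 1%:M = P.
Proof. by rewrite slashE /cmx map_mx1 Amx1 trmx1 mul1mx mulmx1. Qed.

Lemma sfN (a b c e : C) i : (i <= k)%N ->
  slash_factor k (- a) (- b) (- c) (- e) i = ((-1) ^+ k)%:P * slash_factor k a b c e i.
Proof.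
move=> hi; rewrite /slash_factor !scaleNr !polyCN -!opprD.
rewrite [(- (_ + _)) ^+ i]exprNn [(- (_ + _)) ^+ (k - i)]exprNn mulrACA -exprD subnKC //.
by rewrite polyC_exp polyCN.
Qed.

Lemma AmxN (g : 'M[C]_2) : Amx (- g) = (-1) ^+ k *: Amx g.
Proof.
apply/matrixP => i m; rewrite !mxE.
have hi : (i <= k)%N by rewrite -ltnS.
by rewrite sfN // coefCM.
Qed.

Lemma slashN (P : Vkk R k) (g : 'M[C]_2) : slash P (- g) = slash P g.
Proof.
have tz : forall (s : C) (A : 'M[C]_k.+1), (s *: A)^T = s *: A^T.
  by move=> s A; apply/matrixP => i j; rewrite !mxE.
rewrite !slashE AmxN /cmx map_mxN AmxN tz -scalemxAl -scalemxAr scalemxAl scalerA.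
by rewrite -exprD addnn -mul2n exprM sqrrN expr1n expr1n scale1r.
Qed.

Lemma slash0 (g : 'M[C]_2) : slash (0 : Vkk R k) g = 0.
Proof. by rewrite slashE mulmx0 mul0mx. Qed.

Lemma io_neg g : io (mneg g) = - io g.
Proof.
apply/matrixP => i j; rewrite !mxE /=.
by case: (val i == 0)%N; case: (val j == 0)%N; rewrite gi2c_opp.
Qed.
Lemma io_m1 : io m1 = 1%:M.
Proof.
apply/matrixP => i j; rewrite !mxE /=.
case: i => [[|[|?]] hi] //=; case: j => [[|[|?]] hj] //=.
Qed.
Lemma Smx_io : Smx R = io Sg.
Proof. by rewrite /Smx /io /= gi2c_opp. Qed.
Lemma Tmx_io : Tmx R = io Tg.
Proof. by []. Qed.
Lemma Twmx_io : Twmx R = io Twg.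
Proof. by []. Qed.
Lemma Lmx_io : Lmx R = io Lg.
Proof. by rewrite /Lmx /io /= gi2c_opp. Qed.
Lemma Umx_io : Umx R = io (Tg ** Sg).
Proof. by rewrite /Umx Tmx_io Smx_io ioM. Qed.
Lemma Emx_io : Emx R = io (Twg ** Sg ** Lg).
Proof. by rewrite /Emx Twmx_io Smx_io Lmx_io !ioM. Qed.

Lemma det_io g : \det (io g) = gi2c (gdet g).
Proof. by rewrite det_mx2 /gdet gi2c_add gi2c_opp !gi2c_mul. Qed.

Definition dec (z : C) : gi := GI (Num.floor (complex.Re z)) (Num.floor (complex.Im z)).
Definition decode (x : 'M[C]_2) : GM := Mk (dec (x 0 0)) (dec (x 0 1)) (dec (x 1 0)) (dec (x 1 1)).

Lemma dec_gi2c x : dec (gi2c x) = x.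
Proof. by case: x => a b; rewrite /dec /gi2c /= !intrKfloor. Qed.
Lemma gauss_dec z : gaussInt z -> gi2c (dec z) = z.
Proof. by case=> a [b ->]; rewrite -[Complex _ _]/(gi2c (GI a b)) dec_gi2c. Qed.
Lemma decode_io g : decode (io g) = g.
Proof. by case: g => a b c d; rewrite /decode /io !mxE /= !dec_gi2c. Qed.
Lemma io_decode x : inSL2Zi x -> io (decode x) = x.
Proof.
case=> hg _; rewrite [RHS]mx2_eq /io /decode /=.
by rewrite !gauss_dec.
Qed.
Lemma det1_decode x : inSL2Zi x -> det1 (decode x).
Proof.
move=> hx; apply: gi2c_inj; rewrite -det_io io_decode //.
by case: hx.
Qed.
Lemma inSL_io g : det1 g -> inSL2Zi (io g).
Proof.
move=> dg; split; last by rewrite det_io dg.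
move=> i j; rewrite mxE.
by case: (val i == 0)%N; case: (val j == 0)%N; rewrite /gi2c; eexists; eexists.
Qed.

Lemma rev3 (V : zmodType) (a b c : V) : a + b + c = c + b + a.
Proof. by rewrite addrC (addrC a) addrA. Qed.

Lemma part1 (f : 'M[C]_2 -> Vkk R k) : inCp f -> inW (f (Smx R)).
Proof.
case=> fN fC fT fTw fL.
have cio : forall g h, det1 g -> det1 h -> f (io (g ** h)) = slash (f (io g)) (io h) + f (io h).
  by move=> g h dg dh; rewrite ioM fC //; apply: inSL_io.
have fneg : forall g, det1 g -> f (io (mneg g)) = f (io g).
  by move=> g dg; rewrite io_neg fN //; apply: inSL_io.
have f1 : f (io m1) = 0.
  have := cio m1 m1 det1m1 det1m1; rewrite mmul1 io_m1 slash1.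
  by rewrite -{1}[f 1%:M]addr0 => /addrI <-.
have fT' : f (io Tg) = 0 by rewrite -Tmx_io.
have fTw' : f (io Twg) = 0 by rewrite -Twmx_io.
have fL' : f (io Lg) = 0 by rewrite -Lmx_io.
rewrite Smx_io.
have w2 : f (io Sg) - slash (f (io Sg)) (io Lg) = 0.
  have := cio Sg Lg det1S det1L.
  rewrite (_ : Sg ** Lg = mneg (Lg ** Sg)); last by apply: GM_ext => /=; lia.
  rewrite fneg; last by apply: det1M; [exact: det1L | exact: det1S].
  rewrite cio; [|exact: det1L|exact: det1S].
  rewrite fL' slash0 add0r addr0 => h; by rewrite -h subrr.
have PL : slash (f (io Sg)) (io Lg) = f (io Sg).
  by apply/eqP; rewrite eq_sym -subr_eq0 w2.
split.
- have h := cio Sg Sg det1S det1S.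
  rewrite (_ : Sg ** Sg = mneg m1) in h; last by apply: GM_ext => /=; lia.
  rewrite fneg ?det1m1 // f1 in h.
  by rewrite Smx_io addrC -h.
- by rewrite Lmx_io.
- have dU : det1 (Tg ** Sg) by apply: det1M; [exact: det1Tn | exact: det1S].
  have fU : f (io (Tg ** Sg)) = f (io Sg).
    by rewrite (cio _ _ (det1Tn _) det1S) fT' slash0 add0r.
  have h := cio _ _ (det1M dU dU) dU.
  rewrite (_ : Tg ** Sg ** (Tg ** Sg) ** (Tg ** Sg) = mneg m1) in h; last by apply: GM_ext => /=; lia.
  rewrite fneg ?det1m1 // f1 (cio _ _ dU dU) fU slashD slash_act -ioM in h.
  by rewrite Umx_io -ioM rev3 -h.
- have dE : det1 (Twg ** Sg ** Lg).
    by apply: det1M; [apply: det1M; [exact: det1Tn | exact: det1S] | exact: det1L].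
  have dTS : det1 (Twg ** Sg) by apply: det1M; [exact: det1Tn | exact: det1S].
  have fE : f (io (Twg ** Sg ** Lg)) = f (io Sg).
    rewrite (cio _ _ dTS det1L) (cio _ _ (det1Tn _) det1S).
    by rewrite fTw' slash0 add0r fL' addr0 PL.
  have h := cio _ _ (det1M dE dE) dE.
  rewrite (_ : Twg ** Sg ** Lg ** (Twg ** Sg ** Lg) ** (Twg ** Sg ** Lg) = m1) in h; last by apply: GM_ext => /=; lia.
  rewrite f1 (cio _ _ dE dE) fE slashD slash_act -ioM in h.
  by rewrite Emx_io -ioM rev3 -h.
Qed.

Lemma part2 (f g : 'M[C]_2 -> Vkk R k) (a : C) :
  inCp f -> inCp g -> inCp (fun x => a *: f x + g x).
Proof.
case=> fN fC fT fTw fL [gN gC gT gTw gL]; split.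
- by move=> x hx; rewrite fN ?gN.
- move=> x y hx hy; rewrite fC ?gC // slashD slashZ scalerDr.
  by rewrite addrACA.
- by rewrite fT gT scaler0 addr0.
- by rewrite fTw gTw scaler0 addr0.
- by rewrite fL gL scaler0 addr0.
Qed.

Lemma cp_zero (h : 'M[C]_2 -> Vkk R k) : inCp h -> h (Smx R) = 0 ->
  forall x, inSL2Zi x -> h x = 0.
Proof.
case=> hN hC hT hTw hL hS.
have cio : forall g g', det1 g -> det1 g' -> h (io (g ** g')) = slash (h (io g)) (io g') + h (io g').
  by move=> g g' dg dh; rewrite ioM hC //; apply: inSL_io.
have h1 : h (io m1) = 0.
  have := cio m1 m1 det1m1 det1m1; rewrite mmul1 io_m1 slash1.
  by rewrite -{1}[h 1%:M]addr0 => /addrI <-.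
have hadj : forall g, det1 g -> h (io g) = 0 -> h (io (adj g)) = 0.
  move=> g dg hg; have := cio _ _ dg (det1adj dg).
  by rewrite mmul_adj // h1 hg slash0 add0r.
have hre : forall m : nat, h (io (Tn (GI m 0))) = 0.
  elim=> [|m IH]; first by rewrite -[Tn _]/m1 h1.
  by rewrite Tn_re_succ (cio _ _ (det1Tn _) (det1Tn _)) IH slash0 add0r -Tmx_io.
have him : forall m : nat, h (io (Tn (GI 0 m))) = 0.
  elim=> [|m IH]; first by rewrite -[Tn _]/m1 h1.
  by rewrite Tn_im_succ (cio _ _ (det1Tn _) (det1Tn _)) IH slash0 add0r -Twmx_io.
have hTn : forall n, h (io (Tn n)) = 0.
  move=> n; rewrite Tn_split (cio _ _ (det1Tn _) (det1Tn _)).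
  have -> : h (io (Tn (GI (gre n) 0))) = 0.
    by case: (gre n) => m; [exact: hre | rewrite Tn_re_neg; apply: hadj; [exact: det1Tn | exact: hre]].
  have -> : h (io (Tn (GI 0 (gim n)))) = 0.
    by case: (gim n) => m; [exact: him | rewrite Tn_im_neg; apply: hadj; [exact: det1Tn | exact: him]].
  by rewrite slash0 add0r.
suff H : forall g, det1 g -> det1 g /\ h (io g) = 0.
  by move=> x hx; rewrite -(io_decode hx); apply: (H _ (det1_decode hx)).2.
apply: gen_ind.
- by split; [exact: det1m1 | exact: h1].
- move=> x [dx hx]; split; first by apply: det1M => //; exact: det1S.
  by rewrite (cio _ _ dx det1S) hx slash0 add0r -Smx_io.
- move=> x n [dx hx]; split; first by apply: det1M => //; exact: det1Tn.
  by rewrite (cio _ _ dx (det1Tn _)) hx slash0 add0r hTn.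
- move=> x [dx hx]; split; first by apply: det1M => //; exact: det1L.
  by rewrite (cio _ _ dx det1L) hx slash0 add0r -Lmx_io.
- move=> x [dx hx]; split; first by apply: det1N.
  by rewrite io_neg hN //; apply: inSL_io.
Qed.

Lemma part3 (f g : 'M[C]_2 -> Vkk R k) : inCp f -> inCp g ->
  f (Smx R) = g (Smx R) -> forall x, inSL2Zi x -> f x = g x.
Proof.
move=> hf hg eS x hx.
have H := cp_zero (part2 (-1) hg hf).
have h0 : (-1) *: g (Smx R) + f (Smx R) = 0 by rewrite eS scaleN1r addNr.
have := H h0 x hx.
by rewrite scaleN1r addrC => /eqP; rewrite subr_eq0 => /eqP.
Qed.

Lemma part4 (P : Vkk R k) : inW P -> exists f, inCp f /\ f (Smx R) = P.
Proof.
case=> w1 w2 w3 w4.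
have aD : forall (u v : Vkk R k) g, slash (u + v) (io g) = slash u (io g) + slash v (io g).
  by move=> u v g; rewrite slashD.
have aM : forall (v : Vkk R k) g h, slash (slash v (io g)) (io h) = slash v (io (g ** h)).
  by move=> v g h; rewrite slash_act ioM.
have a1 : forall v : Vkk R k, slash v (io m1) = v by move=> v; rewrite io_m1 slash1.
have aN : forall (v : Vkk R k) g, slash v (io (mneg g)) = slash v (io g).
  by move=> v g; rewrite io_neg slashN.
have hS : P + slash P (io Sg) = 0 by rewrite -Smx_io.
have hL : P - slash P (io Lg) = 0 by rewrite -Lmx_io.
have hU : P + slash P (io (Tg ** Sg)) + slash P (io (Tg ** Sg ** (Tg ** Sg))) = 0.
  by rewrite (ioM (Tg ** Sg) (Tg ** Sg)) -Umx_io.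
have hE : P + slash P (io (Twg ** Sg ** Lg)) + slash P (io (Twg ** Sg ** Lg ** (Twg ** Sg ** Lg))) = 0.
  by rewrite (ioM (Twg ** Sg ** Lg) (Twg ** Sg ** Lg)) -Emx_io.
have [F [Fc Fn FT FL FS]] := main_exists (act := fun v g => slash v (io g)) aD aM a1 aN hS hL hU hE.
exists (fun x => F (decode x)); split; last by rewrite Smx_io decode_io.
split.
- move=> x hx; rewrite -(io_decode hx) -io_neg !decode_io Fn //.
  exact: det1_decode.
- move=> x y hx hy; rewrite -(io_decode hx) -(io_decode hy) -ioM !decode_io Fc //;
    exact: det1_decode.
- by rewrite Tmx_io decode_io FT.
- by rewrite Twmx_io decode_io FT.
- by rewrite Lmx_io decode_io FL.
Qed.

End Conc.

Unset Implicit Arguments.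

Theorem proposition5p1 (R : realType) (k : nat) (hk : odd k) :
  (* well-defined: f(S) lies in W_{k,k} *)
  (forall f : 'M[R[i]]_2 -> Vkk R k, inCp f -> inW (f (Smx R))) /\
  (* C_p is a C-subspace (evaluation at S is then evidently C-linear) *)
  (forall (f g : 'M[R[i]]_2 -> Vkk R k) (a : R[i]),
      inCp f -> inCp g -> inCp (fun x => a *: f x + g x)) /\
  (* injective: as maps on PSL(2,Z[i]) *)
  (forall f g : 'M[R[i]]_2 -> Vkk R k, inCp f -> inCp g ->
      f (Smx R) = g (Smx R) -> forall x, inSL2Zi x -> f x = g x) /\
  (* surjective onto W_{k,k} *)
  (forall P : Vkk R k, inW P -> exists f, inCp f /\ f (Smx R) = P).
Proof.
split; first by move=> f hf; exact: (@part1 R k f hf).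
split; first by move=> f g a hf hg; exact: (@part2 R k f g a hf hg).
split; first by move=> f g hf hg e x hx; exact: (@part3 R k f g hf hg e x hx).
by move=> P hP; exact: (@part4 R k P hP).
Qed.
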